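(* Let the setting be as in the context ($A=\mathcal O_{Y,y}$ a discrete valuation ring with $M$-grading, generators $e_m$ of $A_m$ with $e_0=1$, $N=\{n\in M: e_n\in A^\times\}$). If $N=\{0\}$, there exists $d\in M$ such that (i) $d$ generates $M$ as an abelian group, $e_d$ is a uniformizer of $A$, and $e_d$ generates $A$ as an $A_0$-algebra; and (ii) the $A$-linear map $\varphi:A^{\oplus(M\setminus\{0\})}\to\sigma_*\mathfrak m_{\mathrm{St}_{G,y}}$ sending the basis vector indexed by $m$ to the class of $X^m-1$ is surjective with kernel $(e_dA)^{\oplus(M\setminus\{0\})}$.
   Context: Standing assumptions: $S$ is a scheme of characteristic $p>0$, $X$ an $S$-scheme, $M$ a finite abelian $p$-group, $G=\mathrm D(M)=\mathrm{Spec}\,\mathcal O_S[M]$ (basis $X^m$ of the group algebra), and $(f:Y\to X,G)$ a $G$-covering of $X$ (a covering whose groupoid is the action groupoid $G\times_SY\rightrightarrows Y$: finite locally free, generically free, $f$ finite surjective locally free $G$-invariant of rank $|G|$, orbits in open affines) with $Y$ normal and locally noetherian. A $\mathrm D(M)$-action on an affine scheme $\mathrm{Spec}(A)$ corresponds to an $M$-grading $A=\bigoplus_m A_m$ with coaction $\sum a_m\mapsto\sum a_m\otimes X^m$. For a codimension $1$ point $y\in Y$, $A=\mathcal O_{Y,y}$ is a DVR carrying the induced $M$-grading $A=\bigoplus_mA_m$, each $A_m$ free of rank $1$ over $A_0$ with generator $e_m$ ($e_0=1$), and $e_me_n=\alpha_{m,n}e_{m+n}$. The stabilizer $\mathrm{St}_{G,y}=\mathrm{St}_G\times_Y\mathrm{Spec}(A)$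 of the action groupoid (fibre product of $(\mathrm{pr}_2,\text{action}):G\times Y\to Y\times_XY$ with the diagonal) has coordinate ring $A[M]/(e_m(X^m-1):m\in M)$, with structure map $\sigma$ and augmentation ideal $\mathfrak m_{\mathrm{St}_{G,y}}$ generated by the classes of $X^m-1$, $m\neq0$. The covering is called totally ramified at $y$ if $N=\{0\}$. *)

(* Defs.v *)
From HB Require Import structures.
From mathcomp Require Import all_boot all_order all_algebra.
Set Implicit Arguments. Unset Strict Implicit. Unset Printing Implicit Defensive.
Import Order.TTheory GRing.Theory Num.Theory.
Local Open Scope ring_scope.

Section Defs.
Variable A : comUnitRingType.

Definition is_ideal (I : pred A) : Prop :=
  [/\ 0 \in I, (forall x y, x \in I -> y \in I -> x + y \in I)
    & (forall a x, x \in I -> a * x \in I)].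

Definition is_principal (I : pred A) : Prop :=
  exists g : A, forall x, x \in I <-> exists a, x = a * g.

Definition is_local : Prop :=
  is_ideal [pred x : A | x \isn't a GRing.unit].

Definition is_DVR : Prop :=
  [/\ is_local,
      (forall I : pred A, is_ideal I -> is_principal I)
    & exists x : A, x != 0 /\ x \isn't a GRing.unit].

Definition uniformizer (x : A) : Prop :=
  forall y : A, y \isn't a GRing.unit <-> exists a, y = a * x.

Variable M : finZmodType.

(** An M-grading A = (+)_m A_m with A_m = A0 e_m free of rank one over the
    subring A0 = A_0, with e_0 = 1 and e_m e_n = alpha_{m,n} e_{m+n}. *)
Definition MGrading (A0 : pred A) (e : M -> A) : Prop :=
  [/\ 1 \in A0,
      (forall x y, x \in A0 -> y \in A0 -> x - y \in A0)
    & (forall x y, x \in A0 -> y \in A0 -> x * y \in A0)] /\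
  [/\ e 0 = 1,
      (forall m n, exists2 alpha, alpha \in A0 & e m * e n = alpha * e (m + n)),
      (forall a : A, exists2 f : M -> A, (forall m, f m \in A0) &
                                         a = \sum_m f m * e m)
    & (forall f g : M -> A, (forall m, f m \in A0) -> (forall m, g m \in A0) ->
         \sum_m f m * e m = \sum_m g m * e m -> forall m, f m = g m)].

(** The group algebra A[M], elements are finitely supported functions M -> A,
    the monomial X^m being the indicator of m. *)
Definition galg := {ffun M -> A}.
Definition gmul (f g : galg) : galg := [ffun k => \sum_m f m * g (k - m)].
Definition gX (m : M) : galg := [ffun k => (k == m)%:R].
Definition gC (a : A) : galg := [ffun k => (k == 0)%:R * a].

Definition in_gideal (I : finType) (gens : I -> galg) (f : galg) : Prop :=
  exists coef : I -> galg, f = \sum_i gmul (coef i) (gens i).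

(** Generators of the ideal defining the stabilizer: e_m (X^m - 1). *)
Definition stab_rel (e : M -> A) (m : M) : galg := gmul (gC (e m)) (gX m - gX 0).
Definition aug (m : M) : galg := gX m - gX 0.

(** The A-linear map phi : A^(M \ {0}) -> A[M] (to be read modulo the
    stabilizer ideal), sending the basis vector m to X^m - 1. *)
Definition phi (c : {m : M | m != 0} -> A) : galg :=
  \sum_(i : {m : M | m != 0}) gmul (gC (c i)) (aug (val i)).

Definition generates_algebra (A0 : pred A) (x : A) : Prop :=
  forall a : A, exists s : seq A, all (mem A0) s /\
    a = \sum_(i < size s) s`_i * x ^+ i.

End Defs.

(* Main.v *)
Require Import Defs.
From HB Require Import structures.
From mathcomp Require Import all_boot all_order all_algebra.
Import GRing.Theory.
Local Open Scope ring_scope.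

From Stdlib Require Import ClassicalDescription Classical ClassicalEpsilon.
From mathcomp.algebra_tactics Require Import ring.
From mathcomp Require Import zify.
From mathcomp Require Import all_fingroup.
Set Implicit Arguments. Unset Strict Implicit.
Definition pb (P : Prop) : bool := if excluded_middle_informative P then true else false.
Lemma pbP (P : Prop) : pb P <-> P.
Proof. by rewrite /pb; case: excluded_middle_informative. Qed.

Lemma unit_neq0 (A : idomainType) (u : A) : u \is a GRing.unit -> u != 0.
Proof. by move=> Hu; apply/eqP=> u0; rewrite u0 unitr0 in Hu. Qed.

Lemma exists_pi (A : idomainType) : is_DVR A ->
  exists pi : A, [/\ pi \isn't a GRing.unit, pi != 0 &
     forall y, y \isn't a GRing.unit <-> exists a, y = a * pi].
Proof.
case=> loc princ [x [x0 xu]].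
have [pi Hpi] := princ _ loc.
have Hpi' : forall y, y \isn't a GRing.unit <-> exists a, y = a * pi.
  by move=> y; rewrite -Hpi inE.
exists pi; split => //.
  by apply/Hpi'; exists 1; rewrite mul1r.
by apply/eqP=> p0; move: x0; have [a ->] := (proj1 (Hpi' x)) xu; rewrite p0 mulr0 eqxx.
Qed.

Section Val.
Variable A : idomainType.
Variable pi : A.
Hypothesis hpiu : pi \isn't a GRing.unit.
Hypothesis hpi0 : pi != 0.
Hypothesis hpi : forall y, y \isn't a GRing.unit <-> exists a, y = a * pi.
Hypothesis princ : forall I : pred A, is_ideal I -> is_principal I.

Lemma vex x : x != 0 -> exists n u, u \is a GRing.unit /\ x = u * pi ^+ n.
Proof.
move=> x0; apply: NNPP => H.
have Hd : forall n, exists y, x = y * pi ^+ n.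
  elim=> [|n [y Hy]]; first by exists x; rewrite mulr1.
  have : y \isn't a GRing.unit by apply/negP => yu; apply: H; exists n, y.
  case/hpi => a Ha; exists a; by rewrite Hy Ha -mulrA -exprS.
pose J := [pred z : A | pb (exists n b, z * pi ^+ n = b * x)].
have HJ : is_ideal J.
  split; rewrite ?inE.
  - by apply/pbP; exists 0%N, 0; rewrite !mul0r.
  - move=> y z; rewrite !inE => /pbP [n1 [b1 H1]] /pbP [n2 [b2 H2]].
    apply/pbP; exists (n1 + n2)%N, (b1 * pi ^+ n2 + b2 * pi ^+ n1).
    rewrite mulrDl exprD mulrA H1 (mulrC (pi ^+ n1)) mulrA H2 mulrDl.
    by rewrite -!mulrA (mulrC x) (mulrC x).
  - move=> a z; rewrite !inE => /pbP [n [b Hb]].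
    by apply/pbP; exists n, (a * b); rewrite -mulrA Hb mulrA.
have [g Hg] := princ HJ.
have : g \in J by apply/Hg; exists 1; rewrite mul1r.
rewrite inE => /pbP [N [b Hb]].
have [y Hy] := Hd N.+1.
have : y \in J by rewrite inE; apply/pbP; exists N.+1, 1; rewrite mul1r.
case/Hg => c Hc.
have : x * (1 - c * b * pi) = 0.
  have E : x = c * (g * pi ^+ N) * pi by rewrite {1}Hy Hc exprSr !mulrA.
  rewrite Hb in E; rewrite mulrBr mulr1 {1}E.
  ring.
move/eqP; rewrite mulf_eq0 (negPf x0) /= subr_eq0 => /eqP H1.
move/negP: hpiu; apply; apply/unitrPr; exists (c * b); by rewrite mulrC H1.
Qed.

Lemma vex' x : exists n, x != 0 -> exists u, u \is a GRing.unit /\ x = u * pi ^+ n.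
Proof.
have [->|x0] := eqVneq x 0; first by exists 0%N.
by have [n [u Hu]] := vex x0; exists n => _; exists u.
Qed.

Definition v x := proj1_sig (constructive_indefinite_description _ (vex' x)).

Lemma v_spec x : x != 0 -> exists u, u \is a GRing.unit /\ x = u * pi ^+ v x.
Proof. by rewrite /v; case: constructive_indefinite_description. Qed.

Lemma v_uniq u u' n m : u \is a GRing.unit -> u' \is a GRing.unit ->
  u * pi ^+ n = u' * pi ^+ m -> n = m.
Proof.
wlog le_nm : u u' n m / (n <= m)%N.
  move=> W Hu Hu' E; have [le|lt] := leqP n m; first exact: (W u u' n m le Hu Hu' E).
  by symmetry; apply: (W u' u m n (ltnW lt) Hu' Hu); symmetry.
move=> Hu Hu'; rewrite -(subnK le_nm) exprD mulrA => /mulIf.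
move=> /(_ (expf_neq0 _ hpi0)) E.
apply/eqP; rewrite -{1}(add0n n) eqn_add2r eq_sym; apply/negP => Hk.
move: Hu; rewrite E unitrM unitrX_pos; last by rewrite lt0n; apply/negP.
by move=> /andP[_ Hp]; move: hpiu; rewrite Hp.
Qed.

Lemma vE x u n : u \is a GRing.unit -> x = u * pi ^+ n -> v x = n.
Proof.
move=> Hu Hx.
have x0 : x != 0 by rewrite Hx; apply: mulf_neq0; [exact: unit_neq0 | exact: expf_neq0].
have [u' [Hu' Hx']] := v_spec x0.
by apply: (v_uniq Hu' Hu); rewrite -Hx' -Hx.
Qed.

Lemma vM x y : x != 0 -> y != 0 -> v (x * y) = (v x + v y)%N.
Proof.
move=> x0 y0; have [u [Hu Hx]] := v_spec x0; have [u' [Hu' Hy]] := v_spec y0.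
apply: (vE (u := u * u')); first by rewrite unitrM Hu Hu'.
by rewrite {1}Hx {1}Hy exprD -!mulrA (mulrCA (pi ^+ v x)).
Qed.

Lemma v_unit x : x != 0 -> (x \is a GRing.unit) <-> v x = 0%N.
Proof.
move=> x0; split=> [Hu|H]; first by apply: (vE Hu); rewrite mulr1.
have [u [Hu Hx]] := v_spec x0; by rewrite Hx H mulr1.
Qed.

Lemma v_pi : v pi = 1%N.
Proof. have Hs : pi = 1 * pi ^+ 1 by rewrite mul1r. exact: (vE (unitr1 _) Hs). Qed.

Lemma v_exp x k : x != 0 -> v (x ^+ k) = (k * v x)%N.
Proof.
move=> x0; elim: k => [|k IH]; first by apply: (vE (unitr1 _)); rewrite mulr1.
by rewrite exprS vM ?expf_neq0 // IH mulSn.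
Qed.

Lemma v_dvd x y : x != 0 -> y != 0 -> (v x <= v y)%N -> exists z, y = z * x.
Proof.
move=> x0 y0 le; have [u [Hu Hx]] := v_spec x0; have [u' [Hu' Hy]] := v_spec y0.
move: le Hx Hy; set a := v x; set b := v y => le Hx Hy.
have E : pi ^+ b = pi ^+ (b - a) * pi ^+ a by rewrite -exprD subnK.
exists (u' * u^-1 * pi ^+ (b - a)).
rewrite {1}Hy Hx E -{1}(mulr1 u') -(mulVr Hu); ring.
Qed.

Lemma v_nonunit x : x != 0 -> x \isn't a GRing.unit -> (1 <= v x)%N.
Proof. by move=> x0 xu; rewrite lt0n; apply/eqP => /(v_unit x0) H; rewrite H in xu. Qed.

End Val.
Lemma sum_delta (A : idomainType) (M : finType) (F : M -> A) a :
  \sum_y (y == a)%:R * F y = F a.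
Proof.
rewrite (bigD1 a) //= eqxx mul1r big1 ?addr0 // => y /negPf ->; by rewrite mul0r.
Qed.

Section Grad.
Variables (A : idomainType) (M : finZmodType) (A0 : pred A) (e : M -> A).
Hypothesis A0_1 : 1 \in A0.
Hypothesis A0_sub : forall x y, x \in A0 -> y \in A0 -> x - y \in A0.
Hypothesis A0_mul : forall x y, x \in A0 -> y \in A0 -> x * y \in A0.
Hypothesis e0 : e 0 = 1.
Hypothesis emul : forall m n, exists2 alpha, alpha \in A0 & e m * e n = alpha * e (m + n).
Hypothesis edec : forall a : A, exists2 f : M -> A, (forall m, f m \in A0) &
                                         a = \sum_m f m * e m.
Hypothesis euniq : forall f g : M -> A, (forall m, f m \in A0) -> (forall m, g m \in A0) ->
         \sum_m f m * e m = \sum_m g m * e m -> forall m, f m = g m.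
Hypothesis totram : forall n : M, e n \is a GRing.unit -> n = 0.
Hypothesis Mnt : (1 < #|M|)%N.
Variable pi : A.
Hypothesis hpiu : pi \isn't a GRing.unit.
Hypothesis hpi0 : pi != 0.
Hypothesis hpi : forall y, y \isn't a GRing.unit <-> exists a, y = a * pi.
Hypothesis princ : forall I : pred A, is_ideal I -> is_principal I.
Local Notation v := (v hpiu hpi princ).
Let vM := vM hpiu hpi0 hpi princ.
Let v_unit := v_unit hpiu hpi0 hpi princ.
Let v_exp := v_exp hpiu hpi0 hpi princ.
Let v_pi := v_pi hpiu hpi0 hpi princ.
Let v_nonunit := v_nonunit hpiu hpi0 hpi princ.
Let vE := vE hpiu hpi0 hpi princ.
Let v_dvd := @v_dvd _ _ hpiu hpi princ.

Lemma A0_0 : 0 \in A0. Proof. by rewrite -(subrr 1) A0_sub. Qed.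
Lemma A0_opp x : x \in A0 -> - x \in A0. Proof. by move=> H; rewrite -sub0r A0_sub ?A0_0. Qed.
Lemma A0_add x y : x \in A0 -> y \in A0 -> x + y \in A0.
Proof. by move=> Hx Hy; rewrite -(opprK y) A0_sub ?A0_opp. Qed.
Lemma A0_sum (I : finType) (P : pred I) (F : I -> A) :
  (forall i, F i \in A0) -> \sum_(i | P i) F i \in A0.
Proof. by move=> H; apply: (big_ind (fun x => x \in A0)) => //; [exact: A0_0 | exact: A0_add]. Qed.
Lemma A0_delta (b : bool) : (b%:R : A) \in A0.
Proof. by case: b; rewrite ?A0_0. Qed.
Lemma A0_exp x k : x \in A0 -> x ^+ k \in A0.
Proof. by move=> H; elim: k => [|k IH]; rewrite ?expr0 // exprS A0_mul. Qed.

Lemma e_neq0 m : e m != 0.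
Proof.
apply/negP => /eqP em0.
have Heq : \sum_k (k == m)%:R * e k = \sum_k (fun _ => 0) k * e k.
  by rewrite sum_delta em0 big1 // => k _; rewrite mul0r.
have := euniq (fun k => A0_delta (k == m)) (fun _ => A0_0) Heq m.
by rewrite eqxx => /eqP; rewrite oner_eq0.
Qed.

Lemma e_nonunit m : m != 0 -> e m \isn't a GRing.unit.
Proof. by move=> m0; apply/negP => /totram H; rewrite H eqxx in m0. Qed.

Lemma K1 c a y m : c \in A0 -> c != 0 -> a \in A0 -> c * y = a * e m ->
  exists2 b, b \in A0 & y = b * e m /\ c * b = a.
Proof.
move=> Hc c0 Ha Hcy; have [f Hf Hy] := edec y.
have E : \sum_k (fun k => c * f k) k * e k = \sum_k (fun k => (k == m)%:R * a) k * e k.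
  transitivity (c * y). { rewrite Hy big_distrr; apply: eq_bigr => k _; exact/esym/mulrA. }
  rewrite Hcy (eq_bigr (fun k => (k == m)%:R * (a * e k))) ?sum_delta // => k _.
  by rewrite mulrA.
have H := euniq (fun k => A0_mul Hc (Hf k)) (fun k => A0_mul (A0_delta _) Ha) E.
exists (f m); first exact: Hf; split.
  rewrite Hy (bigD1 m) //= big1 ?addr0 // => k km.
  have := H k; rewrite /= (negPf km) mul0r => /eqP; rewrite mulf_eq0 (negPf c0) /=.
  by move/eqP ->; rewrite mul0r.
by have := H m; rewrite /= eqxx mul1r.
Qed.

Lemma powe m k : exists2 al, al \in A0 & e m ^+ k = al * e (m *+ k).
Proof.
elim: k => [|k [al Hal E]]; first by exists 1 => //; rewrite mulr0n e0 mulr1.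
have [be Hbe E'] := emul (m *+ k) m.
exists (al * be); first exact: A0_mul.
by rewrite exprSr E -mulrA E' mulrA mulrSr.
Qed.

Lemma exists_m0 : exists m : M, m != 0.
Proof.
apply: NNPP => H; move: Mnt; rewrite ltnNge => /negP; apply.
apply/card_le1_eqP => x y _ _.
have Hx : x = 0 by apply: NNPP => Hx; apply: H; exists x; apply/eqP.
have Hy : y = 0 by apply: NNPP => Hy; apply: H; exists y; apply/eqP.
by rewrite Hx Hy.
Qed.

Lemma ord_ex (m : M) : exists2 k, (0 < k)%N & m *+ k = 0.
Proof.
exists #[m]%g; first exact: order_gt0.
by rewrite -FinRing.zmodXgE expg_order.
Qed.

Lemma A0_nonunit : exists x, [/\ x \in A0, x != 0 & x \isn't a GRing.unit].
Proof.
have [m m0] := exists_m0; have [k k0 Hk] := ord_ex m.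
have [al Hal Eal] := powe m k; rewrite Hk e0 mulr1 in Eal.
exists al; split => //; first by rewrite -Eal expf_neq0 ?e_neq0.
by rewrite -Eal unitrX_pos // e_nonunit.
Qed.

Lemma exists_t : exists t, [/\ t \in A0, t != 0, t \isn't a GRing.unit &
  forall x, x \in A0 -> x != 0 -> x \isn't a GRing.unit -> (v t <= v x)%N].
Proof.
have [z0 [H1 H2 H3]] := A0_nonunit.
suff S : forall n x, (v x <= n)%N -> x \in A0 -> x != 0 -> x \isn't a GRing.unit ->
  exists t, [/\ t \in A0, t != 0, t \isn't a GRing.unit &
  forall x, x \in A0 -> x != 0 -> x \isn't a GRing.unit -> (v t <= v x)%N].
  exact: (S _ z0 (leqnn _)).
elim=> [|n IH] x le Hx x0 xu.
  by have := v_nonunit x0 xu; rewrite leqNgt (leq_ltn_trans le) //.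
case: (classic (forall y, y \in A0 -> y != 0 -> y \isn't a GRing.unit -> (v x <= v y)%N)).
  by move=> H; exists x; split.
move/not_all_ex_not => [y Hy1]; have [Hy Hy2] := imply_to_and _ _ Hy1; have [y0 Hy3] := imply_to_and _ _ Hy2; have [yu Hle] := imply_to_and _ _ Hy3.
apply: (IH y) => //; move/negP: Hle; rewrite -ltnNge => lt; lia.
Qed.

Section WithT.
Variable t : A.
Hypotheses (Ht : t \in A0) (t0 : t != 0) (tu : t \isn't a GRing.unit).
Hypothesis tmin : forall x, x \in A0 -> x != 0 -> x \isn't a GRing.unit -> (v t <= v x)%N.
Local Notation E := (v t).

Lemma E_gt0 : (0 < E)%N.
Proof. exact: v_nonunit. Qed.

Lemma vA0 x : x \in A0 -> x != 0 -> (E %| v x)%N.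
Proof.
move=> Hx x0.
set k := (v x %/ E)%N.
have tk0 : t ^+ k != 0 by rewrite expf_neq0.
have [y Hy] : exists y, x = y * t ^+ k.
  apply: v_dvd => //; rewrite v_exp //; exact: leq_divM.
have Hc : t ^+ k * y = x * e 0 by rewrite e0 mulr1 mulrC.
have [b Hb [Eyb Ecb]] := K1 (A0_exp k Ht) tk0 Hx Hc.
rewrite e0 mulr1 in Eyb; subst y.
have b0 : b != 0 by apply/eqP => b0; move: x0; rewrite Hy b0 mul0r eqxx.
have Hv : v x = (v b + k * E)%N by rewrite Hy vM // v_exp.
have Hr : v b = (v x %% E)%N.
  have := divn_eq (v x) E; rewrite -/k; lia.
rewrite /dvdn -Hr; apply/eqP; apply: NNPP => Hb0.
have bu : b \isn't a GRing.unit by apply/negP => /(v_unit b0).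
have := tmin Hb b0 bu; rewrite Hr leqNgt ltn_pmod //; exact: E_gt0.
Qed.

Lemma ve_lt m : (v (e m) < E)%N.
Proof.
rewrite ltnNge; apply/negP => le.
have [y Hy] := v_dvd t0 (e_neq0 m) le.
have Hc : t * y = 1 * e m by rewrite mul1r Hy mulrC.
have [b Hb [_ Etb]] := K1 Ht t0 A0_1 Hc.
by move/negP: tu; apply; apply/unitrPr; exists b.
Qed.

Lemma ve_add m n : ((v (e m) + v (e n)) %% E)%N = v (e (m + n)).
Proof.
have [al Hal Eal] := emul m n.
have al0 : al != 0 by apply/eqP => al0; move: Eal; rewrite al0 mul0r => /eqP; rewrite mulf_eq0 !(negPf (e_neq0 _)).
have := vM (e_neq0 m) (e_neq0 n); rewrite Eal vM ?e_neq0 // => <-.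
have /dvdnP [j ->] := vA0 Hal al0.
by rewrite modnMDl modn_small ?ve_lt.
Qed.

Lemma ve0 : v (e 0) = 0%N.
Proof. by apply/(v_unit (e_neq0 0)); rewrite e0 unitr1. Qed.

Lemma ve_inj m n : v (e m) = v (e n) -> m = n.
Proof.
move=> H.
have := ve_add (m - n) n; rewrite subrK H => H2.
have H3 : v (e (m - n)) = 0%N.
  have := divn_eq (v (e (m - n)) + v (e n)) E; rewrite H2.
  have := ve_lt (m - n); set a := v (e (m - n)); set q := ((a + _) %/ E)%N.
  move=> lt Hq.
  have : (a = q * E)%N by lia.
  case: q {Hq} => [|q]; first by [].
  move=> Ha; move: lt; rewrite Ha; nia.
have : e (m - n) \is a GRing.unit by apply/(v_unit (e_neq0 _)).
move/totram/eqP; rewrite subr_eq0 => /eqP //.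
Qed.

Lemma nonunit_add (x y : A) : x \isn't a GRing.unit -> y \isn't a GRing.unit -> x + y \isn't a GRing.unit.
Proof. by move=> /hpi [a ->] /hpi [b ->]; apply/hpi; exists (a + b); rewrite mulrDl. Qed.

Lemma nonunit_mull (a x : A) : x \isn't a GRing.unit -> a * x \isn't a GRing.unit.
Proof. by move=> /hpi [b ->]; apply/hpi; exists (a * b); rewrite mulrA. Qed.

Lemma exists_d : exists d, v (e d) = 1%N.
Proof.
have [f Hf Hpi] := edec pi.
have [m [fm0 Hm]] : exists m, f m * e m != 0 /\ v (f m * e m) = 1%N.
  apply: NNPP => H.
  have Hnu : forall m, f m * e m \isn't a GRing.unit.
    move=> m; case: (eqVneq m 0) => [->|m0]; last by rewrite unitrM negb_and e_nonunit ?orbT.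
    have E1 : pi - \sum_(k | k != 0) f k * e k = f 0 * e 0.
      by rewrite {1}Hpi (bigD1 0) //= addrK.
    rewrite -E1; apply: nonunit_add => //.
    rewrite -mulN1r; apply: nonunit_mull.
    apply: (big_ind (fun z => z \isn't a GRing.unit)).
    - by apply/hpi; exists 0; rewrite mul0r.
    - exact: nonunit_add.
    - by move=> k k0; rewrite unitrM negb_and e_nonunit ?orbT.
  have Hdiv : forall m, exists c, f m * e m = c * pi ^+ 2.
    move=> m; case: (eqVneq (f m * e m) 0) => [->|T0]; first by exists 0; rewrite mul0r.
    apply: v_dvd => //; first exact: expf_neq0.
    rewrite v_exp // v_pi muln1.
    have := v_nonunit T0 (Hnu m).
    have : v (f m * e m) != 1%N by apply/eqP => H1; apply: H; exists m.
    lia.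
  have [c Hc] : exists c, pi = c * pi ^+ 2.
    rewrite {1}Hpi; apply: (big_ind (fun z => exists c, z = c * pi ^+ 2)).
    - by exists 0; rewrite mul0r.
    - by move=> x y [c1 ->] [c2 ->]; exists (c1 + c2); rewrite mulrDl.
    - by move=> k _; apply: Hdiv.
  have : 1 * pi = (c * pi) * pi by rewrite mul1r {1}Hc expr2 mulrA.
  move/(mulIf hpi0) => H1.
  by move/negP: hpiu; apply; apply/unitrPr; exists c; rewrite mulrC -H1.
have fm0' : f m != 0 by apply/eqP => H0; move: fm0; rewrite H0 mul0r eqxx.
move: Hm; rewrite vM ?e_neq0 // => Hm.
case: (eqVneq (v (e m)) 1%N) => [H1|Hne]; first by exists m.
have ve : v (e m) = 0%N by lia.
have m0 : m = 0 by apply: totram; apply/(v_unit (e_neq0 m)).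
subst m; rewrite ve0 addn0 in Hm.
have fu : f 0 \isn't a GRing.unit by apply/negP => /(v_unit fm0'); rewrite Hm.
have E1 : E = 1%N by have := tmin (Hf 0) fm0' fu; have := E_gt0; rewrite Hm; lia.
have [m' m'0] := exists_m0.
have : v (e m') = v (e 0) by have := ve_lt m'; rewrite ve0 E1; lia.
by move/ve_inj => H0; rewrite H0 eqxx in m'0.
Qed.

Section WithD.
Variable d : M.
Hypothesis Hd : v (e d) = 1%N.

Lemma ve_dk k : (k < E)%N -> v (e (d *+ k)) = k.
Proof.
elim: k => [|k IH] lt; first by rewrite mulr0n ve0.
by rewrite mulrSr -ve_add IH ?Hd ?addn1 ?modn_small //; apply: ltnW.
Qed.

Lemma gen m : m = d *+ v (e m).
Proof. by apply: ve_inj; rewrite ve_dk // ve_lt. Qed.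

Lemma ed_nonunit : e d \isn't a GRing.unit.
Proof. by apply/negP => /(v_unit (e_neq0 d)); rewrite Hd. Qed.

Lemma unif : uniformizer (e d).
Proof.
move=> y; split; last by case=> a ->; apply: nonunit_mull; exact: ed_nonunit.
case: (eqVneq y 0) => [->|y0 yu]; first by exists 0; rewrite mul0r.
apply: v_dvd => //; first exact: e_neq0.
by rewrite Hd; apply: v_nonunit.
Qed.

Lemma e_dvd m : m != 0 -> exists u, e m = u * e d.
Proof. by move=> m0; apply/unif/e_nonunit. Qed.

Lemma regroup (x : A) (c : M -> A) (k : M -> nat) (N : nat) :
  (forall m, c m \in A0) -> (forall m, (k m < N)%N) ->
  exists s : seq A, all (mem A0) s /\
    \sum_m c m * x ^+ k m = \sum_(i < size s) s`_i * x ^+ i.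
Proof.
move=> Hc Hk.
exists (mkseq (fun i => \sum_(m | k m == i) c m) N); split.
  apply/allP => z /mapP [i _ ->]; exact: A0_sum.
rewrite size_mkseq.
rewrite (eq_bigr (fun i : 'I_N => \sum_m (if k m == i then c m * x ^+ k m else 0))); last first.
  move=> i _; rewrite nth_mkseq // big_distrl /= big_mkcond /=.
  by apply: eq_bigr => m _; case: eqP => // ->.
rewrite exchange_big /=; apply: eq_bigr => m _.
rewrite (bigD1 (Ordinal (Hk m))) //= eqxx big1 ?addr0 // => i.
move=> Hne; case: eqP => // Ei; exfalso; move/negP: Hne; apply; apply/eqP/val_inj; by rewrite /= Ei.
Qed.

Lemma gen_alg : generates_algebra A0 (e d).
Proof.
have Hg : forall m, exists2 g, g \in A0 & e m = g * e d ^+ v (e m).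
  move=> m; have [be Hbe Ebe] := powe d (v (e m)); rewrite -gen in Ebe.
  have be0 : be != 0 by apply/eqP => b0; move: Ebe; rewrite b0 mul0r; apply/eqP; rewrite expf_neq0 ?e_neq0.
  have Hv : v be = 0%N.
    by have := vM be0 (e_neq0 m); rewrite -Ebe v_exp ?e_neq0 // Hd muln1; lia.
  have beu : be \is a GRing.unit by apply/(v_unit be0).
  have Hc : be * be^-1 = 1 * e 0 by rewrite e0 mulr1 divrr.
  have [b Hb [Eb _]] := K1 Hbe be0 A0_1 Hc.
  exists b => //; rewrite e0 mulr1 in Eb.
  by rewrite Ebe mulrA -Eb mulVr ?mul1r.
have [g Hg1 Hg2] := fin_all_exists2 Hg.
move=> a; have [f Hf ->] := edec a.
have [s [Hs Es]] := regroup (e d) (c := fun m => f m * g m) (k := fun m => v (e m)) (N := E)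
  (fun m => A0_mul (Hf m) (Hg1 m)) ve_lt.
exists s; split => //; rewrite -Es; apply: eq_bigr => m _.
by rewrite {1}(Hg2 m) mulrA.
Qed.

Lemma gmulCl (a : A) (h : galg A M) x : gmul (gC M a) h x = a * h x.
Proof.
rewrite /gmul ffunE (eq_bigr (fun m => (m == 0)%:R * (a * h (x - m)))).
  by rewrite sum_delta subr0.
by move=> m _; rewrite /gC ffunE mulrA.
Qed.

Lemma augE (m y : M) : aug A m y = (y == m)%:R - (y == 0)%:R.
Proof. by rewrite /aug !ffunE. Qed.

Lemma gmul0 (h : galg A M) : gmul 0 h = 0.
Proof. by apply/ffunP=> x; rewrite /gmul !ffunE big1 // => m _; rewrite ffunE mul0r. Qed.

Lemma sum_delta1 (a : M) : \sum_y (y == a)%:R = 1 :> A.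
Proof. by rewrite (eq_bigr (fun y => (y == a)%:R * (fun _ => (1 : A)) y)) ?sum_delta // => y _; rewrite mulr1. Qed.

Lemma sum_sub0 (F : M -> A) :
  \sum_(i : {m : M | m != 0}) F (val i) = \sum_(m | m != 0) F m.
Proof.
rewrite (reindex_omap (val : {m : M | m != 0} -> M) insub); last first.
  by move=> i Pi; rewrite insubT.
apply: eq_bigl=> -[i iA] /=; by rewrite insubT ?iA /= eqxx.
Qed.

Lemma phiE (c : {m : M | m != 0} -> A) y : phi c y = \sum_i c i * aug A (val i) y.
Proof. by rewrite /phi sum_ffunE; apply: eq_bigr => i _; rewrite gmulCl. Qed.

Lemma surj (f : galg A M) : in_gideal (@aug A M) f ->
  exists c : {m : M | m != 0} -> A, in_gideal (stab_rel e) (f - phi c).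
Proof.
case=> coef ->; set F := \sum_i _.
have S0 : \sum_y F y = 0.
  rewrite (eq_bigr (fun y => \sum_i gmul (coef i) (aug A i) y)); last by move=> y _; rewrite sum_ffunE.
  rewrite exchange_big big1 //= => m _.
  rewrite (eq_bigr (fun y => \sum_j coef m j * aug A m (y - j))); last by move=> y _; rewrite ffunE.
  rewrite exchange_big big1 //= => j _.
  rewrite -big_distrr /= (eq_bigr (fun y => (y == m + j)%:R - (y == j)%:R)).
    by rewrite sumrB !sum_delta1 subrr mulr0.
  by move=> y _; rewrite augE subr_eq subr_eq add0r.
exists (fun i => F (val i)).
have -> : F - phi (fun i => F (val i)) = 0.
  apply/ffunP => y; rewrite !ffunE phiE -/F.
  rewrite (sum_sub0 (fun m => F m * aug A m y)).
  rewrite (eq_bigr (fun m => F m * (y == m)%:R - (y == 0)%:R * F m)); last first.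
    by move=> m _; rewrite augE mulrBr [F m * (_ == 0)%:R]mulrC.
  rewrite sumrB -big_distrr /=.
  case: (eqVneq y 0) => [->|y0].
    rewrite big1 ?sub0r ?mul1r ?opprK; last by move=> m m0; rewrite eq_sym (negPf m0) mulr0.
    by move: S0; rewrite (bigD1 0) //=.
  rewrite (bigD1 y) //= eqxx mulr1 big1 ?addr0 ?mul0r ?subr0 ?subrr //.
  by move=> m /andP [_ my]; rewrite eq_sym (negPf my) mulr0.
exists (fun _ => 0); rewrite big1 // => m _; exact: gmul0.
Qed.

Lemma stabE m z : stab_rel e m z = e m * aug A m z.
Proof. by rewrite /stab_rel gmulCl. Qed.

Lemma kerL (c : {m : M | m != 0} -> A) : in_gideal (stab_rel e) (phi c) ->
  forall i, exists b, c i = e d * b.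
Proof.
case=> coef Hc i.
have Ec : phi c (val i) = c i.
  rewrite phiE (bigD1 i) //= augE eqxx (negPf (valP i)) subr0 mulr1 big1 ?addr0 //.
  move=> j ji; rewrite augE (negPf (valP i)) subr0.
  have -> : (val i == val j) = false.
    by apply/negP => /eqP /val_inj Eij; rewrite Eij eqxx in ji.
  by rewrite mulr0.
rewrite -Ec Hc sum_ffunE.
apply: (big_ind (fun z => exists b, z = e d * b)).
- by exists 0; rewrite mulr0.
- by move=> x y [b1 ->] [b2 ->]; exists (b1 + b2); rewrite mulrDr.
move=> m _; rewrite /gmul ffunE.
apply: (big_ind (fun z => exists b, z = e d * b)).
- by exists 0; rewrite mulr0.
- by move=> x y [b1 ->] [b2 ->]; exists (b1 + b2); rewrite mulrDr.
move=> j _; rewrite stabE.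
case: (eqVneq m 0) => [->|m0].
  by exists 0; rewrite augE subrr !mulr0.
have [u ->] := e_dvd m0.
by exists (coef m j * u * aug A m (val i - j)); ring.
Qed.

Lemma tele (y : M) K :
  \sum_(j < K) ((y == d *+ j.+1)%:R - (y == d *+ j)%:R) = (y == d *+ K)%:R - (y == 0)%:R :> A.
Proof.
rewrite -(big_mkord xpredT (fun j => (y == d *+ j.+1)%:R - (y == d *+ j)%:R)).
by rewrite telescope_sumr // mulr0n.
Qed.

Lemma kerR (c : {m : M | m != 0} -> A) : (forall i, exists b, c i = e d * b) ->
  in_gideal (stab_rel e) (phi c).
Proof.
move=> Hc; have [b Hb] := fin_all_exists Hc.
pose K (i : {m : M | m != 0}) := v (e (val i)).
pose F : galg A M := [ffun z => \sum_i b i * \sum_(j < K i) (z == d *+ j)%:R].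
exists (fun m => if m == d then F else 0).
apply/ffunP => y; rewrite phiE sum_ffunE [in RHS](bigD1 d) //= eqxx [in RHS]big1 ?addr0; last first.
  by move=> m /negPf ->; rewrite gmul0 ffunE.
rewrite /gmul ffunE.
rewrite (eq_bigr (fun z => \sum_i (b i * \sum_(j < K i) (z == d *+ j)%:R) * stab_rel e d (y - z)));
  last by move=> z _; rewrite ffunE big_distrl.
rewrite exchange_big /=; apply: eq_bigr => i _.
rewrite (eq_bigr (fun z => b i * \sum_(j < K i) ((z == d *+ j)%:R * stab_rel e d (y - z))));
  last by move=> z _; rewrite -mulrA big_distrl.
rewrite -big_distrr /= exchange_big /=.
rewrite (eq_bigr (fun j : 'I_(K i) => e d * ((y == d *+ j.+1)%:R - (y == d *+ j)%:R))); last first.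
  move=> j _; rewrite sum_delta stabE augE subr_eq subr_eq0 mulrS //.
rewrite -big_distrr /= tele /K -gen Hb.
by rewrite augE mulrCA mulrA.
Qed.

End WithD.
End WithT.

Lemma main_grad : exists d : M,
    [/\ (forall m : M, exists k : nat, m = d *+ k),
        uniformizer (e d),
        generates_algebra A0 (e d),
        (forall f : galg A M, in_gideal (@aug A M) f ->
           exists c : {m : M | m != 0} -> A, in_gideal (stab_rel e) (f - phi c))
      & (forall c : {m : M | m != 0} -> A,
           in_gideal (stab_rel e) (phi c) <->
           forall i, exists b : A, c i = e d * b)].
Proof.
have [t [Ht t0 tu tmin]] := exists_t.
have [d Hd] := exists_d Ht t0 tu tmin.
exists d; split.
- by move=> m; exists (v (e m)); apply: (gen Ht t0 tu tmin Hd).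
- exact: (unif Hd).
- exact: (gen_alg Ht t0 tu tmin Hd).
- exact: surj.
- move=> c; split; [exact: (kerL Hd) | exact: (kerR Ht t0 tu tmin Hd)].
Qed.

End Grad.

Unset Implicit Arguments.

Theorem mainTheorem9
  (p : nat) (A : idomainType) (M : finZmodType) (A0 : pred A) (e : M -> A)
  (charA : p \in [pchar A]) (pM : p.-nat #|M|) (M_nontriv : (1 < #|M|)%N)
  (dvrA : is_DVR A) (grA : MGrading A0 e)
  (totram : forall n : M, e n \is a GRing.unit -> n = 0) :
  exists d : M,
    [/\ (forall m : M, exists k : nat, m = d *+ k),
        uniformizer (e d),
        generates_algebra A0 (e d),
        (forall f : galg A M, in_gideal (@aug A M) f ->
           exists c : {m : M | m != 0} -> A, in_gideal (stab_rel e) (f - phi c))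
      & (forall c : {m : M | m != 0} -> A,
           in_gideal (stab_rel e) (phi c) <->
           forall i, exists b : A, c i = e d * b)].
Proof.
case: grA => [[A0_1 A0_sub A0_mul] [e0 emul edec euniq]].
have [pi [hpiu hpi0 hpi]] := exists_pi dvrA.
have princ : forall I : pred A, is_ideal I -> is_principal I by case: dvrA => _ H _; exact: H.
exact: (main_grad A0_1 A0_sub A0_mul e0 emul edec euniq totram M_nontriv hpiu hpi0 hpi princ).
Qed.
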